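(* Let $f(x)\in\mathbb{Q}(x)$ be a rational function of degree $2$. Then: (a) If $f$ has two distinct poles in $\mathbb{P}^1(\mathbb{Q})$, then $f$ satisfies WP. (b) If $f$ has exactly one pole in $\mathbb{P}^1(\mathbb{Q})$, then $f$ satisfies the EWP but does not satisfy WP. (c) If $f$ has no pole in $\mathbb{P}^1(\mathbb{Q})$, then $f$ does not satisfy the EWP.
   Context: For $X\subseteq\mathbb{Q}$ and a positive integer $N$, write $X_N:=\{x_1+\cdots+x_N : x_1,\dots,x_N\in X\}$. $X$ is a base if $X_N=\mathbb{Q}$ for some $N\ge 1$; $X$ is a virtual base if for some $N\ge 1$ every rational number can be written as $\epsilon_1x_1+\cdots+\epsilon_Nx_N$ with $x_i\in X$ and $\epsilon_i\in\{1,-1\}$. For $f\in\mathbb{Q}(x)$, $f(\mathbb{Q})$ is the set of values $f(a)$ at $a\in\mathbb{Q}$ not a pole of $f$; $f$ satisfies WP if $f(\mathbb{Q})$ is a base and satisfies the EWP if $f(\mathbb{Q})$ is a virtual base. The degree of a rational function is the maximum of the degrees of numerator and denominator in lowest terms; poles are considered on the projective line including $\infty$. *)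

(* Defs.v *)
(* A rational function f in Q(x) is represented in lowest
   terms as p/q with p q : {poly rat}, q != 0, coprimep p q. *)
From HB Require Import structures.
From mathcomp Require Import all_boot all_order all_algebra.
Set Implicit Arguments. Unset Strict Implicit. Unset Printing Implicit Defensive.
Import Order.TTheory GRing.Theory Num.Theory.
Local Open Scope ring_scope.

Definition lowest_terms (p q : {poly rat}) : Prop := q != 0 /\ coprimep p q.

Definition ratfun_deg (p q : {poly rat}) : nat := maxn (size p).-1 (size q).-1.

Definition ratfun_values (p q : {poly rat}) (y : rat) : Prop :=
  exists a : rat, q.[a] != 0 /\ y = p.[a] / q.[a].

Definition sumset (X : rat -> Prop) (N : nat) (y : rat) : Prop :=
  exists xs : seq rat, size xs = N /\ (forall x, x \in xs -> X x) /\
    y = \sum_(x <- xs) x.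

Definition is_base (X : rat -> Prop) : Prop :=
  exists N : nat, (1 <= N)%N /\ forall y : rat, sumset X N y.

Definition is_virtual_base (X : rat -> Prop) : Prop :=
  exists N : nat, (1 <= N)%N /\ forall y : rat,
    exists (xs : seq rat) (eps : seq bool),
      size xs = N /\ size eps = N /\ (forall x, x \in xs -> X x) /\
      y = \sum_(i < N) ((-1) ^+ nth false eps i * nth 0 xs i).

Definition WP (p q : {poly rat}) : Prop := is_base (ratfun_values p q).
Definition EWP (p q : {poly rat}) : Prop := is_virtual_base (ratfun_values p q).

(* Poles of p/q (lowest terms) in P^1(Q); None stands for the point infinity. *)
Definition is_pole (p q : {poly rat}) (P : option rat) : Prop :=
  match P with
  | None => (size q < size p)%N
  | Some a => root q a
  end.

(* Main.v *)
Require Import Defs.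
From HB Require Import structures.
From mathcomp Require Import all_boot all_order all_algebra.
From mathcomp Require Import zify ring lra.
Import Order.TTheory GRing.Theory Num.Theory.
Local Open Scope ring_scope.
Lemma exists_notin (s : seq rat) : exists x : rat, x \notin s.
Proof.
pose S : rat := \sum_(y <- s) `|y|.
have S0 : 0 <= S by rewrite sumr_ge0.
have HS : forall x, x \in s -> `|x| <= S.
  move=> x Hx; rewrite /S (big_rem _ Hx) /= ler_wpDr //.
  by rewrite sumr_ge0.
clearbody S.
exists (1 + S).
apply/negP=> /HS.
rewrite ger0_norm; lra.
Qed.

Lemma base_lemma (X : rat -> Prop) (a b c w : rat) :
  a != 0 -> c != 0 ->
  (forall u, u != 0 -> u != w -> X (a * u + b + c / u)) -> is_base X.
Proof.
move=> a0 c0 HX; exists 6%N; split => // y.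
set T := (y - 6%:R * b) / a.
have [m1 Hm1] := exists_notin [:: 0; 3%:R/2%:R * w; - 3%:R * w; T; T - 3%:R/2%:R * w; T + 3%:R * w].
set m2 := T - m1.
rewrite !inE !negb_or in Hm1.
case/and5P: Hm1 => H1 H2 H3 H4 /andP[H5 H6].
have good : forall m : rat, m != 0 -> m != 3%:R/2%:R * w -> m != - 3%:R * w ->
  X (a * (2%:R/3%:R * m) + b + c / (2%:R/3%:R * m)) /\
  X (a * (-(1/3%:R) * m) + b + c / (-(1/3%:R) * m)).
  move=> m n0 n1 n2; split; apply: HX.
  - by rewrite mulf_eq0 negb_or n0 andbT.
  - apply: contra n1 => /eqP E; apply/eqP; lra.
  - by rewrite mulf_eq0 negb_or n0 andbT.
  - apply: contra n2 => /eqP E; apply/eqP; lra.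
have [G1 G2] := good m1 H1 H2 H3.
have [G3 G4] : X (a * (2%:R/3%:R * m2) + b + c / (2%:R/3%:R * m2)) /\
  X (a * (-(1/3%:R) * m2) + b + c / (-(1/3%:R) * m2)).
  apply: good; rewrite /m2.
  - by rewrite subr_eq0 eq_sym.
  - apply: contra H5 => /eqP E; apply/eqP; lra.
  - apply: contra H6 => /eqP E; apply/eqP; lra.
pose g m := a * m + b + c / m.
exists [:: g (2%:R/3%:R * m1); g (2%:R/3%:R * m1); g (-(1/3%:R) * m1);
           g (2%:R/3%:R * m2); g (2%:R/3%:R * m2); g (-(1/3%:R) * m2)].
split => //; split.
  move=> x; rewrite !inE; do 5 (case/orP; first by move/eqP->); by move/eqP->.
rewrite !big_cons big_nil /g /m2 /T.
field.
apply/and3P; split => //. apply: contra H4 => /eqP E. apply/eqP. rewrite /T. apply: (mulIf a0). rewrite divfK //. lra.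
Qed.

Lemma horner3 (p : {poly rat}) x : (size p <= 3)%N ->
  p.[x] = p`_0 + p`_1 * x + p`_2 * x ^+ 2.
Proof.
move=> sp; rewrite (horner_coef_wide _ sp) !big_ord_recr big_ord0 /=.
by rewrite add0r expr0 mulr1 expr1.
Qed.

Lemma poly3_eq0 (q : {poly rat}) : (size q <= 3)%N ->
  q`_0 = 0 -> q`_1 = 0 -> q`_2 = 0 -> q = 0.
Proof.
move=> sq h0 h1 h2; apply/polyP => i; rewrite coef0.
case: i => [|[|[|i]]] //; rewrite nth_default //.
by apply: leq_trans sq _.
Qed.

Lemma partA1 (p q : {poly rat}) r s :
  (size p <= 3)%N -> (size q <= 3)%N -> q != 0 -> r != s ->
  root q r -> root q s -> p.[r] != 0 -> p.[s] != 0 -> WP p q.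
Proof.
move=> sp sq qn0 rs Hr Hs pr ps.
move: Hr Hs pr ps; rewrite /root !horner3 //.
set q0 := q`_0; set q1 := q`_1; set q2 := q`_2.
set p0 := p`_0; set p1 := p`_1; set p2 := p`_2.
move=> /eqP Hr /eqP Hs pr ps.
have rs0 : r - s != 0 by rewrite subr_eq0.
have E1 : q1 + q2 * (r + s) = 0.
  have E : (r - s) * (q1 + q2 * (r + s)) = (q0 + q1 * r + q2 * r ^+ 2) - (q0 + q1 * s + q2 * s ^+ 2) by ring.
  move: E; rewrite Hr Hs subr0 => /eqP; rewrite mulf_eq0 (negbTE rs0) /= => /eqP //.
have q20 : q2 != 0.
  apply/negP => /eqP q20; apply/negP: qn0; apply/negPn/eqP.
  have q10 : q1 = 0 by move: E1; rewrite q20 mul0r addr0.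
  have q00 : q0 = 0 by move: Hr; rewrite q20 q10 !mul0r !addr0.
  exact: poly3_eq0.
have eq1 : q1 = - q2 * (r + s).
  by apply/eqP; rewrite -subr_eq0 -E1; apply/eqP; ring.
have eq0 : q0 = q2 * r * s.
  by apply/eqP; rewrite -subr_eq0 -Hr eq1; apply/eqP; ring.
pose K := q2 * (r - s) ^+ 2.
have K0 : K != 0 by rewrite mulf_neq0 // expf_neq0.
pose M := 2%:R * p0 + p1 * (r + s) + 2%:R * p2 * r * s.
apply: (@base_lemma _ (- (p0 + p1 * s + p2 * s ^+ 2) / K) (- M / K)
   (- (p0 + p1 * r + p2 * r ^+ 2) / K) (-1)).
- by rewrite mulf_neq0 ?invr_eq0 // oppr_eq0.
- by rewrite mulf_neq0 ?invr_eq0 // oppr_eq0.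
move=> u u0 u1.
have u10 : u + 1 != 0 by apply: contra u1; rewrite addr_eq0.
pose x := (s * u + r) / (u + 1).
have qx : q.[x] = - K * u / (u + 1) ^+ 2.
  rewrite horner3 // -/q0 -/q1 -/q2 eq1 eq0 /x /K; field; exact: u10.
have qx0 : q.[x] != 0.
  by rewrite qx !mulf_neq0 ?invr_eq0 ?expf_neq0 // oppr_eq0.
exists x; split => //.
rewrite qx horner3 // -/p0 -/p1 -/p2 /x /M /K.
field.
by rewrite u10 u0 rs0 q20.
Qed.

Lemma lead_nz (q : {poly rat}) n : size q = n.+1 -> q`_n != 0.
Proof.
move=> sq; have : lead_coef q != 0 by rewrite lead_coef_eq0 -size_poly_eq0 sq.
by rewrite lead_coefE sq.
Qed.

Lemma coef_hi (q : {poly rat}) n : (size q <= n)%N -> q`_n = 0.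
Proof. by move=> h; rewrite nth_default. Qed.

Lemma partA2 (p q : {poly rat}) r :
  (size p <= 3)%N -> q != 0 -> (size q < size p)%N ->
  root q r -> p.[r] != 0 -> WP p q.
Proof.
move=> sp qn0 sqp Hr pr.
have sq2 : size q = 2%N.
  have : (2 <= size q)%N.
    case: (ltnP (size q) 2) => // sq1.
    have c1 : q`_1 = 0 by apply: coef_hi; lia.
    have c2 : q`_2 = 0 by apply: coef_hi; lia.
    move: Hr; rewrite /root horner3; last lia.
    rewrite c1 c2 !mul0r !addr0 => /eqP q00; exfalso; move/negP: qn0; apply; apply/eqP.
    apply: poly3_eq0 => //; lia.
  lia.
have sp3 : size p = 3%N by lia.
have q1n := lead_nz _ _ sq2; have p2n := lead_nz _ _ sp3.
move: Hr pr; rewrite /root !horner3 ?sq2 ?sp3 // (coef_hi q 2) ?sq2 //.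
set q0 := q`_0; set q1 := q`_1; set p0 := p`_0; set p1 := p`_1; set p2 := p`_2.
rewrite mul0r addr0 => /eqP Hr pr.
have eq0 : q0 = - q1 * r by apply/eqP; rewrite -subr_eq0 -Hr; apply/eqP; ring.
apply: (@base_lemma _ ((p0 + p1 * r + p2 * r ^+ 2) / q1) ((p1 + 2%:R * p2 * r) / q1)
   (p2 / q1) 0).
- by rewrite mulf_neq0 ?invr_eq0.
- by rewrite mulf_neq0 ?invr_eq0.
move=> u u0 _.
pose x := r + 1 / u.
have qx : q.[x] = q1 / u.
  rewrite horner3 ?sq2 // (coef_hi q 2) ?sq2 // -/q0 -/q1 eq0 /x; field; exact: u0.
have qx0 : q.[x] != 0 by rewrite qx mulf_neq0 ?invr_eq0.
exists x; split => //.
rewrite qx horner3 ?sp3 // -/p0 -/p1 -/p2 /x.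
field.
by rewrite u0 q1n.
Qed.
Lemma quad_lemma (X : rat -> Prop) (A B C : rat) :
  A != 0 ->
  (forall u, u != 0 -> X (A * u ^+ 2 + B * u + C)) ->
  (forall z, X z -> exists u, z = A * u ^+ 2 + B * u + C) ->
  is_virtual_base X /\ ~ is_base X.
Proof.
move=> A0 HX HXi; split.
  exists 2%N; split => // y.
  pose e : rat := 1 + (`|B| + `|y|) / `|A|.
  have Ap : 0 < `|A| by rewrite normr_gt0.
  have e1 : 1 <= e.
    by rewrite /e lerDl divr_ge0 // addr_ge0.
  have eA : `|A| * e ^+ 2 = `|A| * e + (`|B| + `|y|) * e.
    rewrite /e; field; by rewrite gt_eqF.
  clearbody e.
  have big : `|y - B * e| < `|A| * e ^+ 2.
    rewrite eA.
    have : `|y - B * e| <= `|y| + `|B| * e.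
      by rewrite (le_trans (ler_normB _ _)) // normrM (ger0_norm (le_trans ler01 e1)) lerD2l.
    have : `|A| <= `|A| * e by rewrite ler_peMr // ltW.
    have : `|y| <= `|y| * e by rewrite ler_peMr.
    nra.
  have e0 : e != 0 by rewrite gt_eqF // (lt_le_trans ltr01 e1).
  pose S := (y / e - B) / A.
  pose v := (S + e) / 2%:R.
  pose w := (S - e) / 2%:R.
  have v0 : v != 0.
    apply/negP => /eqP v0.
    have : y = - A * e ^+ 2 + B * e.
      have : S = - e by rewrite /v in v0; lra.
      rewrite /S => H.
      have : y / e - B = - e * A by rewrite -H divfK.
      move=> H2; rewrite -[y](divfK e0) -[y / e](subrK B) H2; ring.
    move=> Hy; move: big; rewrite Hy.
    have -> : - A * e ^+ 2 + B * e - B * e = - (A * e ^+ 2) by ring.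
    by rewrite normrN normrM normrX (ger0_norm (le_trans ler01 e1)) ltxx.
  have w0 : w != 0.
    apply/negP => /eqP w0.
    have : y = A * e ^+ 2 + B * e.
      have : S = e by rewrite /w in w0; lra.
      rewrite /S => H.
      have : y / e - B = e * A by rewrite -{1}(divfK A0 (y / e - B)) H.
      move=> H2; rewrite -[y](divfK e0) -[y / e](subrK B) H2; ring.
    move=> Hy; move: big; rewrite Hy.
    have -> : A * e ^+ 2 + B * e - B * e = A * e ^+ 2 by ring.
    by rewrite normrM normrX (ger0_norm (le_trans ler01 e1)) ltxx.
  pose g u := A * u ^+ 2 + B * u + C.
  exists [:: g v; g w], [:: false; true].
  split => //; split => //; split.
    by move=> x; rewrite !inE => /orP[] /eqP ->; apply: HX.
  rewrite !big_ord_recr big_ord0 /= /g /v /w /S.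
  field.
  by rewrite A0 e0.
case=> N [N1 HN].
pose m := C - B ^+ 2 / (4%:R * A).
have Hb : forall u, (0 < A -> m <= A * u ^+ 2 + B * u + C) /\
                    (A < 0 -> A * u ^+ 2 + B * u + C <= m).
  move=> u.
  have E : A * u ^+ 2 + B * u + C - m = (2%:R * A * u + B) ^+ 2 / (4%:R * A).
    rewrite /m; field; exact: A0.
  have sq : 0 <= (2%:R * A * u + B) ^+ 2 by rewrite sqr_ge0.
  split => Ha.
    rewrite -subr_ge0 E divr_ge0 //; lra.
  rewrite -subr_le0 E; apply: mulr_ge0_le0 => //.
  rewrite invr_le0; lra.
have sumb : forall xs : seq rat, (forall x, x \in xs -> X x) ->
   (0 < A -> (size xs)%:R * m <= \sum_(x <- xs) x) /\
   (A < 0 -> \sum_(x <- xs) x <= (size xs)%:R * m).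
  elim => [|x xs IH] Hxs; first by rewrite big_nil mul0r; split => _.
  have [u ->] := HXi x (Hxs x (mem_head _ _)).
  have [IH1 IH2] : _ := IH (fun z (Hz : z \in xs) => Hxs z (introT orP (or_intror Hz))).
  have [B1 B2] := Hb u.
  rewrite big_cons /= -addn1 natrD mulrDl mul1r.
  split => Ha.
    by rewrite addrC lerD ?B1 ?IH1.
  by rewrite addrC lerD ?B2 ?IH2.
case: (ltrgtP A 0) => HA; last by move: A0; rewrite HA eqxx.
  have [xs [Hs [Hx Hy]]] := HN (N%:R * m + 1).
  have [_ H2] := sumb xs Hx.
  have := H2 HA; rewrite -Hy Hs; lra.
have [xs [Hs [Hx Hy]]] := HN (N%:R * m - 1).
have [H1 _] := sumb xs Hx.
have := H1 HA; rewrite -Hy Hs; lra.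
Qed.

Lemma partB1 (p q : {poly rat}) :
  size p = 3%N -> size q = 1%N -> EWP p q /\ ~ WP p q.
Proof.
move=> sp3 sq1.
have p2n := lead_nz _ _ sp3; have q0n := lead_nz _ _ sq1.
have hq : forall x, q.[x] = q`_0.
  move=> x; rewrite horner3 ?sq1 // (coef_hi q 1) ?sq1 // (coef_hi q 2) ?sq1 //; ring.
apply: (@quad_lemma _ (p`_2 / q`_0) (p`_1 / q`_0) (p`_0 / q`_0)).
- by rewrite mulf_neq0 ?invr_eq0.
- move=> u _; exists u; rewrite hq; split => //.
  rewrite horner3 ?sp3 //; field; exact: q0n.
- move=> z [x [_ ->]]; exists x; rewrite hq horner3 ?sp3 //; field; exact: q0n.
Qed.

Lemma partB2 (p q : {poly rat}) r :
  (size p <= 3)%N -> size q = 3%N -> root q r -> p.[r] != 0 ->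
  (forall s, root q s -> s = r) -> EWP p q /\ ~ WP p q.
Proof.
move=> sp sq3 Hr pr Hu.
have q2n := lead_nz _ _ sq3.
have Hq : forall x, q.[x] = q`_0 + q`_1 * x + q`_2 * x ^+ 2 by move=> x; rewrite horner3 ?sq3.
have Hp : forall x, p.[x] = p`_0 + p`_1 * x + p`_2 * x ^+ 2 by move=> x; rewrite horner3.
move: Hr pr; rewrite /root Hq Hp.
set q0 := q`_0; set q1 := q`_1; set q2 := q`_2.
set p0 := p`_0; set p1 := p`_1; set p2 := p`_2.
move=> /eqP Hr pr.
have eq0' : q0 = - q1 * r - q2 * r ^+ 2 by apply/eqP; rewrite -subr_eq0 -Hr; apply/eqP; ring.
have Hs : - q1 / q2 - r = r.
  apply: Hu; rewrite /root Hq -/q0 -/q1 -/q2 eq0'; apply/eqP; field; exact: q2n.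
have eq1 : q1 = - 2%:R * q2 * r.
  have : - q1 / q2 = 2%:R * r by rewrite -[X in X = _](subrK r) Hs; ring.
  move=> H; rewrite -[q1]opprK -[- q1](divfK q2n) H. rewrite /q2; ring.
have eq0 : q0 = q2 * r ^+ 2 by rewrite eq0' eq1; ring.
have qx : forall x, q.[x] = q2 * (x - r) ^+ 2.
  by move=> x; rewrite Hq -/q0 -/q1 -/q2 eq0 eq1; ring.
apply: (@quad_lemma _ ((p0 + p1 * r + p2 * r ^+ 2) / q2) ((p1 + 2%:R * p2 * r) / q2) (p2 / q2)).
- by rewrite mulf_neq0 ?invr_eq0.
- move=> u u0; exists (r + 1 / u).
  have -> : q.[r + 1 / u] = q2 / u ^+ 2 by rewrite qx; field; exact: u0.
  split; first by rewrite mulf_neq0 ?invr_eq0 ?expf_neq0.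
  rewrite Hp -/p0 -/p1 -/p2; field; by rewrite u0 q2n.
- move=> z [x [qx0 ->]].
  have xr : x - r != 0.
    by apply: contra qx0; rewrite qx => /eqP ->; rewrite expr0n mulr0.
  exists (1 / (x - r)); rewrite qx Hp -/p0 -/p1 -/p2; field; by rewrite xr q2n.
Qed.
Local Open Scope nat_scope.
Lemma mod3_lemma (a c : nat) : ~~ (3 %| c) -> ~~ (3 %| a ^ 2 + c ^ 2).
Proof.
rewrite /dvdn -modnDm -modnXm -[c ^ 2 %% 3]modnXm.
have : a %% 3 < 3 by rewrite ltn_mod.
have : c %% 3 < 3 by rewrite ltn_mod.
move: (a %% 3) (c %% 3) => x y.
by case: y => [|[|[|y]]] //; case: x => [|[|[|x]]].
Qed.

Lemma sq_or_odd n : 0 < n ->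
  (exists m, n = m ^ 2) \/ (exists p, prime p /\ odd (logn p n)).
Proof.
elim: n {-2}n (leqnn n) => [|N IH] n Hn n0; first by case: n Hn n0.
case: (ltngtP n 1) => [|n1|->]; first by rewrite ltnS leqn0 (gtn_eqF n0).
  2: by left; exists 1.
set p := pdiv n.
have pp : prime p by rewrite pdiv_prime.
have pd : p %| n by rewrite pdiv_dvd.
case Ho : (odd (logn p n)); first by right; exists p.
have l1 : 1 <= logn p n by rewrite -pfactor_dvdn // expn1.
have l2 : 2 <= logn p n.
  move: l1 Ho; case: (logn p n) => [|[|k]] //.
have d2 : p ^ 2 %| n by rewrite pfactor_dvdn.
set n' := n %/ p ^ 2.
have En : n = n' * p ^ 2 by rewrite divnK.
have p2 : 1 < p ^ 2.
  have := prime_gt1 pp; rewrite (expnS p 1) expn1; nia.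
have n'0 : 0 < n' by move: n0; rewrite En muln_gt0 => /andP[].
have n'lt : n' < n.
  by rewrite [X in _ < X]En -{1}(muln1 n') ltn_pmul2l.
have [[m Hm]|[q [qp Hq]]] := IH n' (leq_trans n'lt Hn) n'0.
  by left; exists (m * p); rewrite En Hm expnMn.
right; exists q; split => //.
rewrite En (lognM _ n'0) ?expn_gt0 ?prime_gt0 // lognX oddD oddM /= Hq.
by [].
Qed.

Local Open Scope ring_scope.
Lemma key_L (D : int) : (forall s : int, s ^+ 2 != D) ->
  exists (l k : nat), prime l /\ forall X Y : int, ~~ (l %| `|Y|)%N ->
     ~~ ((l ^ k)%N%:Z %| X ^+ 2 - D * Y ^+ 2)%Z.
Proof.
move=> Hs.
have D0 : D != 0 by have := Hs 0; rewrite expr0n /= eq_sym.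
have n0 : (0 < `|D|)%N by rewrite absz_gt0.
have [[m Hm]|[l [lp Hl]]] := sq_or_odd _ n0; last first.
  set e := logn l `|D|.
  exists l, e.+1; split => // X Y HY.
  have cY : coprime (l ^ e.+1) (`|Y| ^ 2) by rewrite coprime_pexpl // coprime_pexpr // prime_coprime.
  apply/negP => H.
  have notD : ~~ (l ^ e.+1 %| `|D|)%N by rewrite pfactor_dvdn // ltnn.
  case HX : ((l ^ e.+1)%N%:Z %| X ^+ 2)%Z.
    have : ((l ^ e.+1)%N%:Z %| D * Y ^+ 2)%Z.
      have -> : D * Y ^+ 2 = X ^+ 2 - (X ^+ 2 - D * Y ^+ 2) by ring.
      by rewrite rpredB.
    rewrite dvdzE absz_nat abszM abszX Gauss_dvdl //.
    by rewrite (negbTE notD).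
  have X0 : X != 0 by apply: contraFN HX => /eqP ->; rewrite expr0n /= dvdz0.
  have a0 : (0 < `|X|)%N by rewrite absz_gt0.
  set t := logn l `|X|.
  move: HX; rewrite dvdzE absz_nat abszX pfactor_dvdn ?expn_gt0 ?a0 // lognX -/t => HX.
  have ht : (t.*2.+1 <= e)%N.
    move: HX Hl; rewrite -/e -mul2n => /negbT; rewrite -leqNgt => h1 oe.
    rewrite ltn_neqAle h1 andbT; apply: contraTneq oe => <-; by rewrite oddM.
  have d1 : ((l ^ t.*2.+1)%N%:Z %| D * Y ^+ 2)%Z.
    apply: dvdz_mulr; rewrite dvdzE absz_nat pfactor_dvdn //.
  have d2 : ((l ^ t.*2.+1)%N%:Z %| X ^+ 2 - D * Y ^+ 2)%Z.
    apply: dvdz_trans H; rewrite dvdzE !absz_nat dvdn_exp2l //.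
    exact: leqW.
  have : ((l ^ t.*2.+1)%N%:Z %| X ^+ 2)%Z.
    have -> : X ^+ 2 = (X ^+ 2 - D * Y ^+ 2) + D * Y ^+ 2 by ring.
    by rewrite rpredD.
  rewrite dvdzE absz_nat abszX pfactor_dvdn ?expn_gt0 ?a0 // lognX -/t.
  by rewrite -mul2n ltnn.
have DE : D = - (m ^ 2)%N%:Z.
  case: D Hs Hm {D0 n0} => n Hs Hm /=.
    by move: (Hs m%:Z) => /eqP; lia.
  lia.
have m0 : (0 < m)%N.
  by move: n0; rewrite Hm; case: m {Hm DE}.
have p3 : prime 3 by [].
set j := logn 3 m.
have [m' cm' Em] := pfactor_coprime p3 m0.
exists 3%N, j.*2.+1; split => // X Y HY.
have -> : X ^+ 2 - D * Y ^+ 2 = ((`|X| ^ 2 + m ^ 2 * `|Y| ^ 2)%N)%:Z.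
  rewrite DE; lia.
rewrite dvdzE !absz_nat.
apply/negP => H.
set a := `|X|%N in H *. set b := `|Y|%N in H HY.
have h1 : (3 ^ j.*2 %| a ^ 2)%N.
  have : (3 ^ j.*2 %| a ^ 2 + m ^ 2 * b ^ 2)%N.
    apply: dvdn_trans H; rewrite dvdn_exp2l //.
  rewrite dvdn_addl // Em -/j expnMn -expnM muln2 -mulnA dvdn_mull //; exact: dvdn_mulr.
have [a' Ea] : exists a' : nat, (a = a' * 3 ^ j)%N.
  have [a0|apos] := posnP a; first by exists 0%N; rewrite a0.
  exists (a %/ 3 ^ j)%N; rewrite divnK // pfactor_dvdn //.
  move: h1; rewrite pfactor_dvdn ?expn_gt0 ?apos // lognX -!muln2.
  lia.
move: H.
have -> : (a ^ 2 + m ^ 2 * b ^ 2 = 3 ^ j.*2 * (a' ^ 2 + (m' * b) ^ 2))%N.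
  rewrite Ea Em -/j !expnMn -!expnM muln2; ring.
rewrite expnS mulnC dvdn_pmul2l ?expn_gt0 //.
apply/negP; apply: mod3_lemma.
by rewrite Euclid_dvdM // negb_or -prime_coprime // cm'.
Qed.
Local Open Scope ring_scope.
Definition Zl (l : nat) (z : rat) :=
  exists n m : int, ~~ (l %| `|m|)%N /\ z = n%:~R / m%:~R.

Lemma Zl_m0 l (m : int) : ~~ (l %| `|m|)%N -> (m%:~R : rat) != 0.
Proof. by apply: contra; rewrite intr_eq0 => /eqP ->; rewrite dvdn0. Qed.

Lemma Zl0 l : prime l -> Zl l 0.
Proof. move=> lp; exists 0, 1; split; last by rewrite mul0r. rewrite /= dvdn1; by apply: contraL lp => /eqP ->. Qed.

Lemma ZlD l : prime l -> forall x y, Zl l x -> Zl l y -> Zl l (x + y).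
Proof.
move=> lp x y [n1 [m1 [H1 ->]]] [n2 [m2 [H2 ->]]].
exists (n1 * m2 + n2 * m1), (m1 * m2); split.
  by rewrite abszM Euclid_dvdM // negb_or H1 H2.
have := Zl_m0 _ _ H1; have := Zl_m0 _ _ H2 => h2 h1.
rewrite !rmorphD !rmorphM /=; field; by rewrite h1 h2.
Qed.

Lemma ZlN l x : Zl l x -> Zl l (- x).
Proof.
move=> [n [m [H ->]]]; exists (- n), m; split => //.
by rewrite rmorphN mulNr.
Qed.

Lemma ZlS l (b : bool) x : Zl l x -> Zl l ((-1) ^+ b * x).
Proof. move=> H; case: b => /=; rewrite ?expr1 ?expr0 ?mul1r ?mulN1r //; exact: ZlN. Qed.

Lemma Zl_inv l : prime l -> ~ Zl l (1 / l%:R).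
Proof.
move=> lp [n [m [H E]]].
have m0 := Zl_m0 _ _ H.
have l0 : (l%:R : rat) != 0 by rewrite pnatr_eq0 -lt0n prime_gt0.
have : (m%:~R : rat) = (l%:Z * n)%:~R.
  rewrite rmorphM /=; move: E => /eqP; rewrite eqr_div // mul1r => /eqP ->.
  by rewrite mulrC.
move/intr_inj => Em; move: H; rewrite Em abszM absz_nat dvdn_mulr //.
Qed.

Lemma Zl_sum l N (F : 'I_N -> rat) : prime l ->
  (forall i, Zl l (F i)) -> Zl l (\sum_(i < N) F i).
Proof.
move=> lp HF; apply: (big_ind (Zl l)) => //; [exact: Zl0 | exact: ZlD].
Qed.

Lemma int_scale (z : rat) (D : int) : (denq z %| D)%Z ->
  exists Z : int, Z%:~R = D%:~R * z.
Proof.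
move=> /dvdzP [k ->]; exists (k * numq z).
rewrite !rmorphM /= numqE; ring.
Qed.

Lemma partC (p q : {poly rat}) :
  (size p <= 3)%N -> size q = 3%N -> (forall r, ~~ root q r) -> ~ EWP p q.
Proof.
move=> sp sq3 nr.
have q2n := lead_nz _ _ sq3.
have Hq : forall x, q.[x] = q`_0 + q`_1 * x + q`_2 * x ^+ 2 by move=> x; rewrite horner3 ?sq3.
have Hp : forall x, p.[x] = p`_0 + p`_1 * x + p`_2 * x ^+ 2 by move=> x; rewrite horner3.
set q0 := q`_0 in Hq; set q1 := q`_1 in Hq q2n; set q2 := q`_2 in Hq q2n.
set p0 := p`_0 in Hp; set p1 := p`_1 in Hp; set p2 := p`_2 in Hp.
pose D : int := denq p0 * denq p1 * denq p2 * denq q0 * denq q1 * denq q2.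
have D0 : (D%:~R : rat) != 0 by rewrite intr_eq0 /D !mulf_neq0 ?denq_neq0.
have [P0 HP0] : exists Z : int, Z%:~R = D%:~R * p0.
  by apply: int_scale; rewrite /D; do 6?[apply: dvdzz | apply: dvdz_mull; apply: dvdzz | apply: dvdz_mulr].
have [P1 HP1] : exists Z : int, Z%:~R = D%:~R * p1.
  by apply: int_scale; rewrite /D; do 6?[apply: dvdzz | apply: dvdz_mull; apply: dvdzz | apply: dvdz_mulr].
have [P2 HP2] : exists Z : int, Z%:~R = D%:~R * p2.
  by apply: int_scale; rewrite /D; do 6?[apply: dvdzz | apply: dvdz_mull; apply: dvdzz | apply: dvdz_mulr].
have [A0 HA0] : exists Z : int, Z%:~R = D%:~R * q0.
  by apply: int_scale; rewrite /D; do 6?[apply: dvdzz | apply: dvdz_mull; apply: dvdzz | apply: dvdz_mulr].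
have [A1 HA1] : exists Z : int, Z%:~R = D%:~R * q1.
  by apply: int_scale; rewrite /D; do 6?[apply: dvdzz | apply: dvdz_mull; apply: dvdzz | apply: dvdz_mulr].
have [A2 HA2] : exists Z : int, Z%:~R = D%:~R * q2.
  by apply: int_scale; rewrite /D; do 6?[apply: dvdzz | apply: dvdz_mull; apply: dvdzz | apply: dvdz_mulr].
clearbody D.
have A2n : (A2%:~R : rat) != 0 by rewrite HA2 mulf_neq0.
pose De : int := A1 ^+ 2 - 4%:R * A2 * A0.
have Hs : forall s : int, s ^+ 2 != De.
  move=> s; apply/negP => /eqP Es.
  have Es' : (s%:~R : rat) ^+ 2 = A1%:~R ^+ 2 - 4%:R * A2%:~R * A0%:~R.
    move: (congr1 (fun z : int => (z%:~R : rat)) Es) => /=.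
    rewrite /De !expr2 intrB !intrM => ->; by [].
  apply: (negP (nr ((- A1%:~R + s%:~R) / (2%:R * A2%:~R)))).
  rewrite /root Hq.
  have -> : q0 = A0%:~R / D%:~R by rewrite HA0; field.
  have -> : q1 = A1%:~R / D%:~R by rewrite HA1; field.
  have -> : q2 = A2%:~R / D%:~R by rewrite HA2; field.
  apply/eqP.
  have E : A0%:~R / D%:~R + A1%:~R / D%:~R * ((- A1%:~R + s%:~R) / (2%:R * A2%:~R)) +
     A2%:~R / D%:~R * ((- A1%:~R + s%:~R) / (2%:R * A2%:~R)) ^+ 2 =
     ((s%:~R : rat) ^+ 2 - (A1%:~R ^+ 2 - 4%:R * A2%:~R * A0%:~R)) / (4%:R * A2%:~R * D%:~R).
    by field; rewrite A2n D0.
  by rewrite E Es' subrr mul0r.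
have [l [k [lp HL]]] := key_L _ Hs.
have l0 : (l%:R : rat) != 0 by rewrite pnatr_eq0 -lt0n prime_gt0.
have Hval : forall z, ratfun_values p q z -> Zl l (l%:R ^+ k * z).
  move=> z [x [qx0 ->]].
  set u := numq x; set v := denq x.
  have v0 : (v%:~R : rat) != 0 by rewrite intr_eq0 denq_neq0.
  have xE : x = u%:~R / v%:~R by rewrite divq_num_den.
  pose Pint : int := P0 * v ^+ 2 + P1 * u * v + P2 * u ^+ 2.
  pose Qint : int := A0 * v ^+ 2 + A1 * u * v + A2 * u ^+ 2.
  have HPi : (Pint%:~R : rat) = D%:~R * v%:~R ^+ 2 * p.[x].
    rewrite /Pint !expr2 !intrD !intrM HP0 HP1 HP2 Hp xE; field; exact: v0.
  have HQi : (Qint%:~R : rat) = D%:~R * v%:~R ^+ 2 * q.[x].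
    rewrite /Qint !expr2 !intrD !intrM HA0 HA1 HA2 Hq xE; field; exact: v0.
  have Qn : (Qint%:~R : rat) != 0 by rewrite HQi !mulf_neq0 ?expf_neq0.
  have fE : p.[x] / q.[x] = Pint%:~R / Qint%:~R.
    rewrite HPi HQi; field; by rewrite qx0 v0 D0.
  have ndiv : ~~ ((l ^ k)%N%:Z %| Qint)%Z.
    have cuv := coprime_num_den x; rewrite -/u -/v in cuv.
    have : ~~ (l %| `|v|)%N || ~~ (l %| `|u|)%N.
      rewrite -negb_and; apply/negP => /andP[h1 h2].
      have : (l %| gcdn `|u| `|v|)%N by rewrite dvdn_gcd h1 h2.
      by rewrite (eqP cuv) dvdn1 => /eqP l1; move: lp; rewrite l1.
    case/orP => hdiv.
      have := HL (2%:R * A2 * u + A1 * v) v hdiv; apply: contra => h.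
      have -> : (2%:R * A2 * u + A1 * v) ^+ 2 - De * v ^+ 2 = 4%:R * A2 * Qint by rewrite /De /Qint; ring.
      exact: dvdz_mull.
    have := HL (2%:R * A0 * v + A1 * u) u hdiv; apply: contra => h.
    have -> : (2%:R * A0 * v + A1 * u) ^+ 2 - De * u ^+ 2 = 4%:R * A0 * Qint by rewrite /De /Qint; ring.
    exact: dvdz_mull.
  have n0 : (0 < `|Qint|)%N by rewrite absz_gt0 -(intr_eq0 rat).
  have [m cm En] := pfactor_coprime lp n0.
  set j := logn l `|Qint| in En.
  have jk : (j < k)%N.
    rewrite ltnNge; apply: contra ndiv => hkj.
    rewrite dvdzE absz_nat En; apply: dvdn_mull; exact: dvdn_exp2l.
  exists (Pint * (l ^ (k - j))%N%:Z), ((-1) ^+ (Qint < 0)%R * m%:Z); split.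
    by rewrite abszMsign absz_nat -prime_coprime.
  have QE : (Qint%:~R : rat) = ((-1) ^+ (Qint < 0)%R * m%:Z)%:~R * l%:R ^+ j.
    rewrite {1}[Qint]intEsign En PoszM rmorphM rmorphM /= !rmorphM /=.
    by rewrite -!pmulrn natrX mulrA.
  have m0 : (((-1) ^+ (Qint < 0)%R * m%:Z)%:~R : rat) != 0.
    apply: contra Qn => /eqP h; by rewrite QE h mul0r.
  rewrite fE QE intrM -pmulrn natrX.
  have -> : (l%:R : rat) ^+ k = l%:R ^+ (k - j) * l%:R ^+ j by rewrite -exprD subnK // ltnW.
  have hm : (m%:R : rat) != 0.
    rewrite pnatr_eq0; apply/negP => /eqP m0'; move: cm; rewrite m0' /coprime gcdn0 => /eqP l1.
    by move: lp; rewrite l1.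
  field; by rewrite hm intr_eq0 signr_eq0 expf_neq0.
move=> [N [N1 HN]].
have [xs [eps [sx [se [Hx Hy]]]]] := HN (1 / l%:R ^+ k.+1).
apply: (Zl_inv _ lp).
have -> : 1 / l%:R = l%:R ^+ k * (1 / (l%:R : rat) ^+ k.+1) by rewrite exprS; field; rewrite l0 expf_neq0.
rewrite Hy mulr_sumr; apply: Zl_sum => // i.
rewrite mulrCA; apply: ZlS; apply: Hval; apply: Hx.
by apply: mem_nth; rewrite sx.
Qed.

Theorem theorem4p3 (p q : {poly rat}) :
  lowest_terms p q -> ratfun_deg p q = 2%N ->
  ((exists P1 P2 : option rat, P1 <> P2 /\ is_pole p q P1 /\ is_pole p q P2) ->
     WP p q) /\
  ((exists P : option rat, is_pole p q P /\
      forall P' : option rat, is_pole p q P' -> P' = P) ->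
     EWP p q /\ ~ WP p q) /\
  ((forall P : option rat, ~ is_pole p q P) -> ~ EWP p q).
Proof.
move=> [qn0 cpq]; rewrite /ratfun_deg => Hdeg.
have sp : (size p <= 3)%N by lia.
have sq : (size q <= 3)%N by lia.
have s3 : size p = 3%N \/ size q = 3%N by lia.
have sq0 : (0 < size q)%N by rewrite size_poly_gt0.
have hroot : forall r, root q r -> p.[r] != 0.
  by move=> r h; apply: (@coprimep_root _ q p r) => //; rewrite coprimep_sym.
split; [|split].
- move=> [P1 [P2 [neq [h1 h2]]]].
  case: P1 h1 neq => [r|] h1; case: P2 h2 => [s|] h2 neq /=.
  + apply: (partA1 p q r s sp sq qn0 _ h1 h2 (hroot r h1) (hroot s h2)).
    by apply/eqP => E; apply: neq; rewrite E.
  + exact: (partA2 p q r sp qn0 h2 h1 (hroot r h1)).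
  + exact: (partA2 p q s sp qn0 h1 h2 (hroot s h2)).
  + by case: neq.
- move=> [[r|] [h1 hu]].
  + have nlt : ~ (size q < size p)%N by move=> h; have := hu None h.
    have sq3 : size q = 3%N.
      case: s3 => // h; have : ~ (size q < 3)%N by rewrite -h. lia.
    apply: (partB2 p q r sp sq3 h1 (hroot r h1)).
    by move=> s hs; case: (hu (Some s) hs).
  + have h1' : (size q < size p)%N := h1.
    have sp3 : size p = 3%N by lia.
    have sq1 : size q = 1%N.
      case: (ltngtP (size q) 1) => // h; first lia.
      have sq2 : size q = 2%N by lia.
      exfalso.
      have q1n := lead_nz _ _ sq2.
      have hr : root q (- q`_0 / q`_1).
        rewrite /root horner3 ?sq2 // (coef_hi q 2) ?sq2 //.
        apply/eqP; field; exact: q1n.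
      by have := hu (Some _) hr.
    exact: partB1.
- move=> hn.
  have nr : forall r, ~~ root q r by move=> r; apply/negP => h; exact: (hn (Some r) h).
  have nlt : ~ (size q < size p)%N by move=> h; exact: (hn None h).
  have sq3 : size q = 3%N.
    case: s3 => // h; have : ~ (size q < 3)%N by rewrite -h. lia.
  exact: partC.
Qed.
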